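(* Let $G=(V,E,A)$ be an undirected attributed graph with $A=\{a,b\}$, let $k,\delta$ be integers, and let $R,C\subseteq V$ be disjoint vertex sets. Let $G'$ be the subgraph of $G$ induced by $R\cup C$, properly colored with colors from a totally ordered set (adjacent vertices receive distinct colors), and let every vertex have a distinct integer ID. Define the total order $\prec$ on $R\cup C$ by $u\prec v$ iff $color(u)<color(v)$, or $color(u)=color(v)$ and $ID(u)<ID(v)$, and let $\vec G'$ be the directed acyclic graph obtained from $G'$ by orienting each edge from its $\prec$-smaller endpoint to its $\prec$-larger endpoint. Let $CP(G')$ be a colorful directed path of $\vec G'$ with the maximum number of vertices. Then $ub_{cp}=|CP(G')|$ satisfies $MRFC(R,C)\le ub_{cp}$.
   Context: For $S\subseteq V$, $cnt_S(x)=|\{v\in S:A(v)=x\}|$. A $(k,\delta)$-relative fair clique of $G$ is a clique $K$ of $G$ with $cnt_K(a)\ge k$, $cnt_K(b)\ge k$, $|cnt_K(a)-cnt_K(b)|\le\delta$, such that no clique $K'\supsetneq K$ of $G$ satisfies these three conditions. $MRFC(R,C)$ denotes the maximum number of vertices of a $(k,\delta)$-relative fair clique $K$ of $G$ with $R\subseteq K\subseteq R\cup C$ (the search instance $(R,C)$: $R$ is the current partial clique and $C$ the candidate set). A colorful path is a path $v_1,\dots,v_p$ whose vertices all have pairwise distinct colors; $|CP(G')|$ is its number of vertices. *)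

(* Defs.v *)
From mathcomp Require Import all_boot all_order all_algebra.
Set Implicit Arguments. Unset Strict Implicit. Unset Printing Implicit Defensive.
Import Order.TTheory GRing.Theory Num.Theory.

(* Attributes {a,b} are encoded as bool: a = true, b = false. *)
Section Defs.
Variables (V : finType) (e : rel V) (A : V -> bool).

Definition cnt (S : {set V}) (x : bool) : nat := #|[set v in S | A v == x]|.

Definition is_clique (K : {set V}) : bool :=
  [forall u in K, forall v in K, (u != v) ==> e u v].

Definition fair (k delta : int) (K : {set V}) : bool :=
  [&& (k <= (cnt K true)%:Z)%R, (k <= (cnt K false)%:Z)%R
    & (`|(cnt K true)%:Z - (cnt K false)%:Z| <= delta)%R].

Definition rfc (k delta : int) (K : {set V}) : bool :=
  [&& is_clique K, fair k delta K &
      [forall K' : {set V}, ((K \proper K') && is_clique K') ==> ~~ fair k delta K']].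

(* MRFC(R,C): max size of an rfc K with R <= K <= R u C (0 if none) *)
Definition MRFC (k delta : int) (R C : {set V}) : nat :=
  \max_(K : {set V} | [&& rfc k delta K, R \subset K & K \subset R :|: C]) #|K|.

Variables (d : Order.disp_t) (Col : orderType d) (color : V -> Col) (ID : V -> int).

Definition prec (u v : V) : bool :=
  ((color u < color v)%O || ((color u == color v) && (ID u < ID v)%R)).

Definition arc (R C : {set V}) (u v : V) : bool :=
  [&& u \in R :|: C, v \in R :|: C, e u v & prec u v].

Definition colorful_dpath (R C : {set V}) (p : seq V) : bool :=
  [&& all (fun v => v \in R :|: C) p, sorted (arc R C) p & uniq (map color p)].
End Defs.

(* Main.v *)
Require Import Defs.
From mathcomp Require Import all_boot all_order all_algebra.
Import Order.TTheory GRing.Theory Num.Theory.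

Lemma sorted_transfer (T : eqType) (r1 r2 : rel T) (s : seq T) :
  uniq s -> sorted r1 s ->
  {in s &, forall u v, u != v -> r1 u v -> r2 u v} -> sorted r2 s.
Proof.
case: s => // x s.
elim: s x => [|y s IH] x //= /andP[xn /andP[yn us]] /andP[rxy ps] H.
apply/andP; split.
  apply: H; rewrite ?inE ?eqxx ?orbT //.
  by apply: contraNneq xn => ->; rewrite inE eqxx.
apply: IH; first by rewrite /= yn.
  by [].
move=> u v uin vin; apply: H; rewrite inE ?uin ?vin orbT //.
Qed.

Theorem lemma14 (V : finType) (e : rel V) (A : V -> bool)
  (e_sym : symmetric e) (e_irr : irreflexive e)
  (k delta : int) (R C : {set V}) (RC_disj : [disjoint R & C])
  (d : Order.disp_t) (Col : orderType d) (color : V -> Col)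
  (color_proper : forall u v, u \in R :|: C -> v \in R :|: C -> e u v ->
                  color u != color v)
  (ID : V -> int) (ID_inj : injective ID)
  (p : seq V) (p_cp : colorful_dpath e color ID R C p)
  (p_max : forall q : seq V, colorful_dpath e color ID R C q -> size q <= size p) :
  MRFC e A k delta R C <= size p.
Proof.
apply/bigmax_leqP => K /and3P[/and3P[cl _ _] _ KRC].
have eK : forall u v, u \in K -> v \in K -> u != v -> e u v.
  by move=> u v uK vK; move/forallP: cl => /(_ u); rewrite uK /= =>
    /forallP/(_ v); rewrite vK /= => /implyP.
have inRC : forall u, u \in K -> u \in R :|: C by move=> u; apply: (subsetP KRC).
have cK : forall u v, u \in K -> v \in K -> u != v -> color u != color v.
  by move=> u v uK vK uv; apply: color_proper; auto.
pose le := fun u v : V => (color u <= color v)%O.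
have tot : total le by move=> u v; rewrite /le le_total.
set q := sort le (enum K).
have sq : size q = #|K| by rewrite size_sort cardE.
rewrite -sq; apply: p_max.
have memq : forall u, (u \in q) = (u \in K) by move=> u; rewrite mem_sort mem_enum.
have uq : uniq q by rewrite sort_uniq enum_uniq.
apply/and3P; split.
- by apply/allP => u; rewrite memq; apply: inRC.
- apply: sorted_transfer uq (sort_sorted tot _) _.
  move=> u v; rewrite !memq => uK vK uv luv.
  have cuv := cK u v uK vK uv.
  rewrite /Defs.arc; rewrite (inRC u uK) (inRC v vK) eK //= /Defs.prec.
  by rewrite lt_neqAle cuv; rewrite /le in luv; rewrite luv.
- rewrite map_inj_in_uniq // => u v; rewrite !memq => uK vK cuv.
  case: (eqVneq u v) => // /(cK u v uK vK).
  by rewrite cuv eqxx.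
Qed.
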